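(* Let $r\ge 3$ and $n \ge \frac{(r-1)(2r+1)}{2}$ be integers. If $\mathcal{H}$ is an $n$-vertex $r$-graph that is $\mathrm{T}_r$-free and satisfies $\delta_{r-1}^{+}(\mathcal{H}) > \frac{2n}{2r+1}$, then $\mathcal{H}$ is $r$-partite.
   Context: An $r$-graph $\mathcal{H}$ is a collection of $r$-subsets (edges) of a finite vertex set $V(\mathcal{H})$. The shadow is $\partial\mathcal{H}=\{e\in\binom{V(\mathcal{H})}{r-1}\colon e\subseteq E \text{ for some } E\in\mathcal{H}\}$. For $e\in\partial\mathcal{H}$, $N_{\mathcal{H}}(e)=\{v\in V(\mathcal{H})\colon e\cup\{v\}\in\mathcal{H}\}$. The minimum positive codegree is $\delta_{r-1}^{+}(\mathcal{H})=\min\{|N_{\mathcal{H}}(e)|\colon e\in\partial\mathcal{H}\}$. The $r$-uniform generalized triangle is $\mathrm{T}_r=\{\{1,\ldots,r-1,r\},\{1,\ldots,r-1,r+1\},\{r,r+1,\ldots,2r-1\}\}$; $\mathcal{H}$ is $\mathrm{T}_r$-free if it contains no subhypergraph isomorphic to $\mathrm{T}_r$. $\mathcal{H}$ is $r$-partite if $V(\mathcal{H})$ can be partitioned into $r$ parts $V_1,\dots,V_r$ such that every edge contains exactly one vertex from each part. *)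

(* Defs.v *)
From mathcomp Require Import all_boot.
Set Implicit Arguments. Unset Strict Implicit. Unset Printing Implicit Defensive.

Definition is_rgraph (T : finType) (r : nat) (H : {set {set T}}) : Prop :=
  forall E, E \in H -> #|E| = r.

Definition shadow (T : finType) (r : nat) (H : {set {set T}}) : {set {set T}} :=
  [set e : {set T} | (#|e| == r.-1) && [exists E in H, e \subset E]].

Definition nbhd (T : finType) (H : {set {set T}}) (e : {set T}) : {set T} :=
  [set v | v |: e \in H].

(* δ^+_{r-1}(H) > 2n/(2r+1), written without division:
   every e in the shadow has (2r+1)|N(e)| > 2n. *)
Definition min_pos_codeg_gt (T : finType) (r : nat) (H : {set {set T}}) : Prop :=
  forall e, e \in shadow r H -> 2 * #|T| < (2 * r + 1) * #|nbhd H e|.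

(* Generalized triangle T_r on vertex set 'I_(2r-1) (0-indexed):
   {0,..,r-2, r-1}, {0,..,r-2, r}, {r-1, r, ..., 2r-2}. *)
Definition Tr_edge1 (r : nat) : {set 'I_(2 * r - 1)} :=
  [set i : 'I_(2 * r - 1) | i <= r - 1].
Definition Tr_edge2 (r : nat) : {set 'I_(2 * r - 1)} :=
  [set i : 'I_(2 * r - 1) | (i < r - 1) || (i == r :> nat)].
Definition Tr_edge3 (r : nat) : {set 'I_(2 * r - 1)} :=
  [set i : 'I_(2 * r - 1) | r - 1 <= i].

Definition contains_Tr (T : finType) (r : nat) (H : {set {set T}}) : Prop :=
  exists f : 'I_(2 * r - 1) -> T, injective f /\
    f @: Tr_edge1 r \in H /\ f @: Tr_edge2 r \in H /\ f @: Tr_edge3 r \in H.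

Definition Tr_free (T : finType) (r : nat) (H : {set {set T}}) : Prop :=
  ~ contains_Tr r H.

Definition r_partite (T : finType) (r : nat) (H : {set {set T}}) : Prop :=
  exists p : T -> 'I_r,
    forall E, E \in H -> forall i : 'I_r, #|[set v in E | p v == i]| = 1.

(* Main.v *)
Require Import Defs.
From mathcomp Require Import all_boot zify.
Set Implicit Arguments. Unset Strict Implicit. Unset Printing Implicit Defensive.

Lemma Tr_embed (T : finType) (r : nat) (C F : {set T}) (u w : T) :
  3 <= r -> #|C| = r.-1 -> u \notin C -> w \notin C -> u != w ->
  #|F| = r -> u \in F -> w \in F -> F :&: C = set0 ->
  exists f : 'I_(2 * r - 1) -> T, injective f /\
    f @: Tr_edge1 r = u |: C /\ f @: Tr_edge2 r = w |: C /\ f @: Tr_edge3 r = F.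
Proof.
move=> Hr HC uC wC uw HF uF wF FC.
set sC := enum C; set sF := enum (F :\ u :\ w).
have szC : size sC = r - 1 by rewrite -cardE HC; lia.
have szF : size sF = r - 2.
  rewrite -cardE.
  have := cardsD1 u F; rewrite uF HF.
  have := cardsD1 w (F :\ u); rewrite !inE eq_sym uw wF /=. lia.
set s := sC ++ u :: w :: sF.
have sz : size s = 2 * r - 1 by rewrite size_cat /= szC szF; lia.
have disjCF : forall x, x \in C -> x \in F -> False.
  move=> x xC xF; have : x \in F :&: C by rewrite inE xF xC.
  by rewrite FC inE.
have us : uniq s.
  rewrite cat_uniq enum_uniq /= enum_uniq !mem_enum !inE.
  apply/and4P; split => //.
  - rewrite (negbTE uC) (negbTE wC) /=; apply/hasPn => x.
    rewrite /sF /sC !mem_enum !inE => /andP[_ /andP[_ xF]]; apply/negP=> xC; exact: disjCF xC xF.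
  - by rewrite negb_or (negbTE uw) /= /sF mem_enum !inE eqxx /= andbF.
  - by rewrite eqxx.
pose f (i : 'I_(2 * r - 1)) := nth u s i.
have nthC : forall i, i < r - 1 -> nth u s i = nth u sC i.
  by move=> i hi; rewrite nth_cat szC hi.
have nthu : nth u s (r - 1) = u by rewrite nth_cat szC ltnn subnn.
have nthw : nth u s r = w.
  by rewrite nth_cat szC ltnNge leq_subr /= (_ : r - (r - 1) = 1) //; lia.
have nthF : forall i, r < i -> nth u s i = nth u sF (i - r.+1).
  move=> i hi; rewrite nth_cat szC ifF; last by apply/negbTE; lia.
  by rewrite (_ : i - (r - 1) = (i - r.+1).+2) //; lia.
exists f; split.
  move=> i j; rewrite /f => /eqP; rewrite nth_uniq ?sz ?ltn_ord // => /eqP; exact: val_inj.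
split; [|split].
- apply/setP => x; apply/imsetP/idP.
  + move=> [i]; rewrite /Tr_edge1 inE /f => hi ->.
    case: (ltnP i (r - 1)) => h.
      by rewrite nthC // setU1r // -mem_enum mem_nth // szC.
    by rewrite (_ : nat_of_ord i = r - 1) ?nthu ?setU11 //; lia.
  + rewrite !inE => /orP[/eqP->|xC].
      have hi : r - 1 < 2 * r - 1 by lia.
      by exists (Ordinal hi); rewrite /Tr_edge1 ?inE //= /f nthu.
    have hi : index x sC < 2 * r - 1.
      have : index x sC < size sC by rewrite index_mem mem_enum.
      rewrite szC; lia.
    exists (Ordinal hi); rewrite /Tr_edge1 ?inE /=.
      have : index x sC < size sC by rewrite index_mem mem_enum.
      rewrite szC; lia.
    by rewrite /f nthC ?nth_index ?mem_enum // -szC index_mem mem_enum.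
- apply/setP => x; apply/imsetP/idP.
  + move=> [i]; rewrite /Tr_edge2 inE /f => /orP[hi|/eqP hi] ->.
      by rewrite nthC // setU1r // -mem_enum mem_nth // szC.
    by rewrite hi nthw setU11.
  + rewrite !inE => /orP[/eqP->|xC].
      have hi : r < 2 * r - 1 by lia.
      by exists (Ordinal hi); rewrite /Tr_edge2 ?inE //= ?eqxx ?orbT // /f nthw.
    have hi : index x sC < 2 * r - 1.
      have : index x sC < size sC by rewrite index_mem mem_enum.
      rewrite szC; lia.
    exists (Ordinal hi); rewrite /Tr_edge2 ?inE /=.
      have : index x sC < size sC by rewrite index_mem mem_enum.
      by rewrite szC => ->.
    by rewrite /f nthC ?nth_index ?mem_enum // -szC index_mem mem_enum.
- apply/setP => x; apply/imsetP/idP.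
  + move=> [i]; rewrite /Tr_edge3 inE /f => hi ->.
    case: (ltngtP i r) => h.
    * by rewrite (_ : nat_of_ord i = r - 1) ?nthu //; lia.
    * rewrite nthF //.
      have : nth u sF (i - r.+1) \in sF by rewrite mem_nth // szF; have := ltn_ord i; lia.
      by rewrite mem_enum !inE => /andP[_ /andP[_ ->]].
    * by rewrite h nthw.
  + move=> xF.
    case: (x =P u) => [->|xu].
      have hi : r - 1 < 2 * r - 1 by lia.
      by exists (Ordinal hi); rewrite /Tr_edge3 ?inE //= /f nthu.
    case: (x =P w) => [->|xw].
      have hi : r < 2 * r - 1 by lia.
      by exists (Ordinal hi); rewrite /Tr_edge3 ?inE //= ?leq_subr // /f nthw.
    have xsF : x \in sF by rewrite /sF mem_enum !inE xF andbT; apply/andP; split; apply/eqP.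
    have hi : (index x sF + r.+1) < 2 * r - 1.
      have : index x sF < size sF by rewrite index_mem.
      rewrite szF; lia.
    exists (Ordinal hi); rewrite /Tr_edge3 ?inE /=; first lia.
    rewrite /f nthF /=; last lia.
    by rewrite addnK nth_index.
Qed.

Lemma nbhd_notin (T : finType) (r : nat) (H : {set {set T}}) (e : {set T}) (v : T) :
  0 < r -> is_rgraph r H -> #|e| = r.-1 -> v \in nbhd H e -> v \notin e.
Proof.
move=> r0 Hrg He; rewrite inE => /Hrg; rewrite cardsU1 He.
by case: (v \in e) => //=; lia.
Qed.

Lemma shadow_edge (T : finType) (r : nat) (H : {set {set T}}) (F : {set T}) (c : T) :
  is_rgraph r H -> F \in H -> c \in F -> F :\ c \in shadow r H.
Proof.
move=> Hrg FH cF; rewrite inE; apply/andP; split.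
  have := cardsD1 c F; rewrite cF Hrg //; lia.
by apply/existsP; exists F; rewrite FH subsetDl.
Qed.

Lemma shadow_card (T : finType) (r : nat) (H : {set {set T}}) (e : {set T}) :
  e \in shadow r H -> #|e| = r.-1.
Proof. by rewrite inE => /andP[/eqP]. Qed.

Lemma codeg_ge (T : finType) (r : nat) (H : {set {set T}}) (e : {set T}) :
  (r - 1) * (2 * r + 1) <= 2 * #|T| -> min_pos_codeg_gt r H ->
  e \in shadow r H -> r <= #|nbhd H e|.
Proof. move=> Hn Hcd /Hcd; nia. Qed.

Lemma P1 (T : finType) (r : nat) (H : {set {set T}}) (C F : {set T}) (u w : T) :
  3 <= r -> is_rgraph r H -> Tr_free r H ->
  (forall e, e \in shadow r H -> r <= #|nbhd H e|) ->
  #|C| = r.-1 -> u |: C \in H -> w |: C \in H -> u != w ->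
  F \in H -> u \in F -> w \in F -> False.
Proof.
move=> Hr Hrg HTr Hd HC uCH wCH uw.
have uC : u \notin C by apply: (nbhd_notin _ Hrg HC); [apply: leq_trans Hr | rewrite inE].
have wC : w \notin C by apply: (nbhd_notin _ Hrg HC); [apply: leq_trans Hr | rewrite inE].
move=> FH uF wF; move: F FH uF wF.
suff : forall k F, F \in H -> u \in F -> w \in F -> #|F :&: C| = k -> False.
  by move=> hk F FH uF wF; exact: (hk _ F FH uF wF erefl).
elim=> [|k IH] F FH uF wF.
  move/eqP; rewrite cards_eq0 => /eqP FC.
  have [f [finj [e1 [e2 e3]]]] := Tr_embed Hr HC uC wC uw (Hrg F FH) uF wF FC.
  by apply: HTr; exists f; rewrite e1 e2 e3.
move=> Hk.
have [c cFC] : exists c, c \in F :&: C by apply/card_gt0P; rewrite Hk.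
move: (cFC); rewrite inE => /andP[cF cC].
have Ash := shadow_edge Hrg FH cF.
have : ~~ (nbhd H (F :\ c) \subset C).
  apply/negP => /subset_leq_card; have := Hd _ Ash; rewrite HC => h1 h2.
  have h3 : r.-1 < r by rewrite ltn_predL; apply: leq_trans Hr.
  by move: (leq_trans h1 h2); rewrite leqNgt h3.
case/subsetPn => x xN xC.
apply: (IH (x |: (F :\ c))).
- by move: xN; rewrite inE.
- by rewrite !inE uF andbT; apply/orP; right; apply/eqP => ucE; move: uC; rewrite ucE cC.
- by rewrite !inE wF andbT; apply/orP; right; apply/eqP => ucE; move: wC; rewrite ucE cC.
have -> : (x |: (F :\ c)) :&: C = (F :&: C) :\ c.
  apply/setP => y; rewrite !inE; case: (y =P x) => [->|_] /=.
    by rewrite (negbTE xC) !andbF.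
  by rewrite andbA.
by have := cardsD1 c (F :&: C); rewrite cFC Hk add1n => -[->].
Qed.

Definition good (T : finType) (r : nat) (H : {set {set T}}) :=
  [/\ 3 <= r, is_rgraph r H, Tr_free r H, min_pos_codeg_gt r H &
      (r - 1) * (2 * r + 1) <= 2 * #|T|].

Lemma link_dis (T : finType) (r : nat) (H : {set {set T}}) (D1 D2 : {set T}) (y z : T) :
  good r H -> #|D1| = r.-1 -> #|D2| = r.-1 -> y \in D1 -> y |: D2 \in H ->
  z |: D1 \in H -> z |: D2 \in H -> False.
Proof.
case=> Hr Hrg HTr Hcd Hn HD1 HD2 yD1 yH zH1 zH2.
have zD1 : z \notin D1 by apply: (nbhd_notin _ Hrg HD1); [apply: leq_trans Hr | rewrite inE].
have yz : y != z by apply/eqP => eyz; move: zD1; rewrite -eyz yD1.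
have Hd : forall e, e \in shadow r H -> r <= #|nbhd H e| by move=> e; apply: codeg_ge.
exact: (P1 Hr Hrg HTr Hd HD2 yH zH2 yz zH1 (setU1r _ yD1) (setU11 _ _)).
Qed.

Lemma class_dis (T : finType) (r : nat) (H : {set {set T}}) (E : {set T}) (v v' z : T) :
  good r H -> E \in H -> v \in E -> v' \in E -> v != v' ->
  z \in nbhd H (E :\ v) -> z \in nbhd H (E :\ v') -> False.
Proof.
move=> G EH vE v'E vv'; rewrite !inE => z1 z2.
have [_ Hrg _ _ _] := G.
apply: (link_dis (y := v') G _ _ _ _ z1 z2).
- exact: shadow_card (shadow_edge Hrg EH vE).
- exact: shadow_card (shadow_edge Hrg EH v'E).
- by rewrite !inE eq_sym vv'.
- by rewrite setD1K.
Qed.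

Lemma sum_le1 (T : finType) (A : {set T}) (P : pred T) :
  (forall g g', g \in A -> g' \in A -> P g -> P g' -> g = g') ->
  \sum_(g in A) (P g : nat) <= 1.
Proof.
move=> Huniq.
case: (boolP [exists g in A, P g]) => [/existsP[g /andP[gA Pg]]|/existsPn hn].
  rewrite (bigD1 g) //= Pg big1 // => g' /andP[g'A g'g].
  by case: (boolP (P g')) => // Pg'; move: g'g; rewrite (Huniq _ _ g'A gA Pg' Pg) eqxx.
by rewrite big1 // => g gA; move: (hn g); rewrite gA /= => /negbTE ->.
Qed.

Lemma sum_gt0 (T : finType) (A : {set T}) (P : pred T) :
  0 < \sum_(g in A) (P g : nat) -> exists g, g \in A /\ P g.
Proof.
case: (boolP [exists g in A, P g]) => [/existsP[g /andP[gA Pg]]|/existsPn hn].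
  by exists g.
by rewrite big1 // => g gA; move: (hn g); rewrite gA /= => /negbTE ->.
Qed.

Lemma sum_card (T : finType) (A : {set T}) : \sum_z (z \in A : nat) = #|A|.
Proof.
rewrite -sum1_card [RHS]big_mkcond /=; apply: eq_bigr => i _; by case: (i \in A).
Qed.

Lemma class_sum (T : finType) (r : nat) (H : {set {set T}}) (G : {set T}) :
  good r H -> G \in H ->
  r * (2 * #|T|).+1 <= (2 * r + 1) * \sum_(g in G) #|nbhd H (G :\ g)|.
Proof.
case=> Hr Hrg HTr Hcd Hn GH.
rewrite big_distrr /= -{1}(Hrg G GH) -sum_nat_const.
by apply: leq_sum => g gG; apply: Hcd; apply: shadow_edge.
Qed.

Lemma count3 (T : finType) (r : nat) (H : {set {set T}}) (G M C : {set T}) :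
  good r H -> G \in H -> M \in H -> C \in shadow r H ->
  exists z g m, [/\ g \in G, m \in M, z \in nbhd H C, z \in nbhd H (G :\ g)
    & z \in nbhd H (M :\ m)].
Proof.
move=> Hg GH MH CS.
case: (boolP [exists z, [exists g in G, [exists m in M,
   [&& z \in nbhd H C, z \in nbhd H (G :\ g) & z \in nbhd H (M :\ m)]]]]).
  move=> /existsP[z /existsP[g /andP[gG /existsP[m /andP[mM /and3P[h1 h2 h3]]]]]].
  by exists z, g, m.
move=> /existsPn Hno; exfalso.
pose aG z := \sum_(g in G) (z \in nbhd H (G :\ g) : nat).
pose aM z := \sum_(g in M) (z \in nbhd H (M :\ g) : nat).
have [Hr Hrg HTr Hcd Hn] := Hg.
have aG1 : forall z, aG z <= 1.
  move=> z; apply: sum_le1 => g g' gG g'G h1 h2; apply/eqP; apply/negPn/negP => gg'.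
  exact: (class_dis Hg GH gG g'G gg' h1 h2).
have aM1 : forall z, aM z <= 1.
  move=> z; apply: sum_le1 => g g' gG g'G h1 h2; apply/eqP; apply/negPn/negP => gg'.
  exact: (class_dis Hg MH gG g'G gg' h1 h2).
have pt : forall z, aG z + aM z + (z \in nbhd H C) <= 2.
  move=> z; have h1 := aG1 z; have h2 := aM1 z.
  case: (boolP (z \in nbhd H C)) => zC /=; first last.
    by rewrite addn0; exact: (leq_add h1 h2).
  case: (posnP (aG z)) => hG; first by rewrite hG add0n addn1 ltnS.
  case: (posnP (aM z)) => hM; first by rewrite hM addn0 addn1 ltnS.
  have [g [gG zg]] := sum_gt0 hG; have [m [mM zm]] := sum_gt0 hM.
  move: (Hno z) => /existsPn /(_ g); rewrite gG /= => /existsPn /(_ m).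
  by rewrite mM zC zg zm.
have tot : \sum_z (aG z + aM z + (z \in nbhd H C)) <= 2 * #|T|.
  rewrite mulnC -sum_nat_const; exact: leq_sum => z _.
rewrite !big_split /= sum_card in tot.
have eG : \sum_z aG z = \sum_(g in G) #|nbhd H (G :\ g)|.
  rewrite /aG exchange_big /=; apply: eq_bigr => g _; exact: sum_card.
have eM : \sum_z aM z = \sum_(g in M) #|nbhd H (M :\ g)|.
  rewrite /aM exchange_big /=; apply: eq_bigr => g _; exact: sum_card.
rewrite eG eM in tot.
have h1 := class_sum Hg GH; have h2 := class_sum Hg MH; have h3 := Hcd C CS.
move: tot h1 h2 h3.
set S1 := \sum_(g in G) _; set S2 := \sum_(g in M) _; set S3 := #|nbhd H C|.
set N := 2 * #|T|; set K := 2 * r + 1 => tot h1 h2 h3.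
have h4 : K * N.+1 <= K * (S1 + S2 + S3).
  rewrite !mulnDr; have -> : K * N.+1 = r * N.+1 + r * N.+1 + N.+1 by rewrite /K mulnDl mul1n -mulnA mul2n -addnn.
  by apply: leq_add; [apply: leq_add|].
have h5 := leq_trans h4 (leq_mul (leqnn K) tot).
by move: h5; rewrite leq_pmul2l /K ?addn1 // ltnn.
Qed.

Lemma nbhd_notin' (T : finType) (r : nat) (H : {set {set T}}) (e : {set T}) (v : T) :
  good r H -> e \in shadow r H -> v \in nbhd H e -> v \notin e.
Proof.
case=> Hr Hrg _ _ _ eS; apply: (nbhd_notin _ Hrg (shadow_card eS)).
exact: leq_trans Hr.
Qed.

Lemma twin_cross (T : finType) (r : nat) (H : {set {set T}}) (E C : {set T}) (v v' a b : T) :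
  good r H -> E \in H -> v \in E -> v' \in E -> v != v' ->
  a \in nbhd H (E :\ v) -> b \in nbhd H (E :\ v') -> C \in shadow r H ->
  a \in nbhd H C -> b \in nbhd H C -> False.
Proof.
move=> Hg EH vE v'E vv' aN bN CS aC bC.
have [Hr Hrg _ _ _] := Hg.
have GH : a |: (E :\ v) \in H by move: aN; rewrite inE.
have MH : b |: (E :\ v') \in H by move: bN; rewrite inE.
have [z [g [m [gG mM zC zg zm]]]] := count3 Hg GH MH CS.
have ga : g = a.
  apply/eqP; apply/negPn/negP => ga.
  apply: (link_dis (D1 := (a |: E :\ v) :\ g) (D2 := C) (y := a) (z := z) Hg).
  - exact: shadow_card (shadow_edge Hrg GH gG).
  - exact: shadow_card CS.
  - by rewrite !inE eqxx andbT eq_sym.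
  - by move: aC; rewrite inE.
  - by move: zg; rewrite inE.
  - by move: zC; rewrite inE.
have mb : m = b.
  apply/eqP; apply/negPn/negP => mb.
  apply: (link_dis (D1 := (b |: E :\ v') :\ m) (D2 := C) (y := b) (z := z) Hg).
  - exact: shadow_card (shadow_edge Hrg MH mM).
  - exact: shadow_card CS.
  - by rewrite !inE eqxx andbT eq_sym.
  - by move: bC; rewrite inE.
  - by move: zm; rewrite inE.
  - by move: zC; rewrite inE.
move: zg zm; rewrite ga mb !setU1K.
- move=> h1 h2; exact: (class_dis Hg EH vE v'E vv' h1 h2).
- exact: nbhd_notin' Hg (shadow_edge Hrg EH v'E) bN.
- exact: nbhd_notin' Hg (shadow_edge Hrg EH vE) aN.
Qed.

Definition col (T : finType) (H : {set {set T}}) (E0 : {set T}) (v0 : T) (C : {set T}) : T :=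
  odflt v0 [pick u in E0 | [exists y, (y \in nbhd H C) && (y \in nbhd H (E0 :\ u))]].

Lemma col_spec (T : finType) (r : nat) (H : {set {set T}}) (E0 C : {set T}) (v0 u y : T) :
  good r H -> E0 \in H -> C \in shadow r H -> u \in E0 ->
  y \in nbhd H C -> y \in nbhd H (E0 :\ u) -> col H E0 v0 C = u.
Proof.
move=> Hg E0H CS uE yC yE; rewrite /col; case: pickP => [u' /andP[u'E /existsP[y' /andP[h1 h2]]]|hn] /=.
  apply/eqP; apply/negPn/negP => u'u.
  exact: (twin_cross Hg E0H u'E uE u'u h2 yE CS h1 yC).
by move: (hn u); rewrite uE /=; move/negbT/existsPn/(_ y); rewrite yC yE.
Qed.

Lemma col_vertex (T : finType) (r : nat) (H : {set {set T}}) (E0 F F' : {set T}) (v0 z : T) :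
  good r H -> E0 \in H -> F \in H -> F' \in H -> z \in F -> z \in F' ->
  col H E0 v0 (F :\ z) = col H E0 v0 (F' :\ z).
Proof.
move=> Hg E0H FH F'H zF zF'.
have [Hr Hrg _ _ _] := Hg.
have C'S := shadow_edge Hrg F'H zF'.
have [y [u [f [uE fF yC' yE yf]]]] := count3 Hg E0H FH C'S.
rewrite (col_spec v0 Hg E0H C'S uE yC' yE).
have fz : f = z.
  apply/eqP; apply/negPn/negP => fz.
  apply: (link_dis (D1 := F :\ f) (D2 := F' :\ z) (y := z) (z := y) Hg).
  - exact: shadow_card (shadow_edge Hrg FH fF).
  - exact: shadow_card C'S.
  - by rewrite !inE zF andbT eq_sym.
  - by rewrite setD1K.
  - by move: yf; rewrite inE.
  - by move: yC'; rewrite inE.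
rewrite fz in yf.
exact: (col_spec v0 Hg E0H (shadow_edge Hrg FH zF) uE yf yE).
Qed.

Lemma col_surj (T : finType) (r : nat) (H : {set {set T}}) (E0 F : {set T}) (v0 w : T) :
  good r H -> E0 \in H -> F \in H -> w \in E0 ->
  exists2 m, m \in F & col H E0 v0 (F :\ m) = w.
Proof.
move=> Hg E0H FH wE.
have [Hr Hrg _ _ _] := Hg.
have CS := shadow_edge Hrg E0H wE.
have [z [g [m [gE mF zC zg zm]]]] := count3 Hg E0H FH CS.
exists m => //.
exact: (col_spec v0 Hg E0H (shadow_edge Hrg FH mF) wE zm zC).
Qed.

Theorem theorem1p2 (r n : nat) (T : finType) (H : {set {set T}}) :
  3 <= r ->
  (r - 1) * (2 * r + 1) <= 2 * n ->
  #|T| = n ->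
  is_rgraph r H ->
  Tr_free r H ->
  min_pos_codeg_gt r H ->
  r_partite r H.
Proof.
move=> Hr Hn HT Hrg HTr Hcd.
have Hg : good r H by split => //; rewrite HT.
move: Hg; clear Hn HT.
case: r Hr Hrg HTr Hcd => // r' Hr Hrg HTr Hcd Hg.
case: (set_0Vmem H) => [H0|[E0 E0H]].
  by exists (fun _ => ord0) => E; rewrite H0 inE.
have [v0 v0E] : exists v0, v0 \in E0.
  by apply/card_gt0P; rewrite (Hrg _ E0H).
pose p z := match [pick F in H | z \in F] with
            | Some F => col H E0 v0 (F :\ z) | None => v0 end.
have p_edge : forall F z, F \in H -> z \in F -> p z = col H E0 v0 (F :\ z).
  move=> F z FH zF; rewrite /p; case: pickP => [F' /andP[F'H zF']|hn].
    exact: (col_vertex v0 Hg E0H F'H FH zF' zF).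
  by move: (hn F); rewrite FH zF.
pose idx (u : T) : 'I_r'.+1 := inord (index u (enum E0)).
exists (fun z => idx (p z)) => F FH i.
have szE : size (enum E0) = r'.+1 by rewrite -cardE (Hrg _ E0H).
pose w := nth v0 (enum E0) i.
have hsurj : forall j : 'I_r'.+1, exists2 m, m \in F & idx (p m) = j.
  move=> j; pose wj := nth v0 (enum E0) j.
  have wjE : wj \in E0 by rewrite -mem_enum mem_nth // szE.
  have [m mF hm] := col_surj v0 Hg E0H FH wjE.
  exists m => //; rewrite (p_edge F m FH mF) hm /idx /wj index_uniq ?enum_uniq ?szE //.
  exact: inord_val.
have himg : [set idx (p x) | x in F] = [set: 'I_r'.+1].
  apply/setP => j; rewrite inE; have [m mF <-] := hsurj j.
  by apply/imsetP; exists m.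
have hinj : {in F &, injective (fun x => idx (p x))}.
  apply/imset_injP; rewrite himg cardsT card_ord (Hrg _ FH).
  by [].
have [m mF hm] := hsurj i.
have -> : [set v in F | idx (p v) == i] = [set m].
  apply/setP => x; rewrite !inE; apply/andP/eqP => [[xF /eqP hx]|->].
    by apply: hinj => //; rewrite hx hm.
  by rewrite mF hm.
exact: cards1.
Qed.
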